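(* Let $p\ge1$ and $n\ge p+1$ be integers. Then $S_{n-1,s}\cap S_{n,s}=\varnothing$.
   Context: Fix an integer $p\ge1$. For an integer $k\ge p$ and real $\Lambda$, the differential operator on $[-1,1]$ is $$L^{2k}(\Lambda)=(-1)^k\frac{d^{2k}}{dx^{2k}}-\Lambda(-1)^{k-p}\frac{d^{2k-2p}}{dx^{2k-2p}}.$$ A real number $\Lambda$ is an eigenvalue of order $k$ if there is a real $z\in C^{2k}[-1,1]$, $z\not\equiv0$, such that: - $L^{2k}(\Lambda)z=0$ on $[-1,1]$, and - $z^{(j)}(\pm1)=0$ for $j=0,\dots,k-1$. Such a $z$ is an eigenfunction of order $k$. $S_{k,s}$ (resp. $S_{k,a}$) is the set of eigenvalues of order $k$ admitting an even (resp. odd) eigenfunction of order $k$. *)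

(* Defs.v *)
From Stdlib Require Import Reals.
Open Scope R_scope.

Definition in_I (x : R) : Prop := -1 <= x <= 1.

Definition has_deriv_on_I (f f' : R -> R) : Prop :=
  forall x, in_I x ->
    limit1_in (fun y => (f y - f x) / (y - x)) (fun y => in_I y /\ y <> x) (f' x) x.

Definition cont_on_I (f : R -> R) : Prop :=
  forall x, in_I x -> limit1_in f in_I (f x) x.

Definition Cm_derivs (m : nat) (d : nat -> R -> R) : Prop :=
  (forall j, (j < m)%nat -> has_deriv_on_I (d j) (d (S j))) /\ cont_on_I (d m).

Definition is_eigenfunction (p k : nat) (Lam : R) (z : R -> R) : Prop :=
  exists d : nat -> R -> R,
    d 0%nat = z /\
    Cm_derivs (2 * k) d /\
    (forall x, in_I x ->
       (-1) ^ k * d (2 * k)%nat x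
       - Lam * (-1) ^ (k - p) * d (2 * k - 2 * p)%nat x = 0) /\
    (forall j, (j < k)%nat -> d j 1 = 0 /\ d j (-1) = 0) /\
    (exists x, in_I x /\ z x <> 0).

Definition even_on_I (z : R -> R) : Prop := forall x, in_I x -> z (- x) = z x.

Definition S_s (p k : nat) (Lam : R) : Prop :=
  (p <= k)%nat /\ exists z, is_eigenfunction p k Lam z /\ even_on_I z.

(* Main.v *)
Require Import Defs.
From Stdlib Require Import Reals Lra Lia.
From Coquelicot Require Import Coquelicot.
Open Scope R_scope.

Definition clamp (x : R) : R := Rmax (-1) (Rmin 1 x).

Lemma clamp_I x : in_I (clamp x).
Proof. unfold in_I, clamp, Rmax, Rmin; repeat destruct Rle_dec; lra. Qed.

Lemma clamp_id x : in_I x -> clamp x = x.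
Proof. unfold in_I, clamp, Rmax, Rmin; intros; repeat destruct Rle_dec; lra. Qed.

Lemma clamp_lip x y : Rabs (clamp y - clamp x) <= Rabs (y - x).
Proof. unfold clamp, Rmax, Rmin; repeat destruct Rle_dec; split_Rabs; lra. Qed.

Lemma clamp_cont f : cont_on_I f -> forall x, continuity_pt (fun y => f (clamp y)) x.
Proof.
  intros Hf x eps Heps.
  destruct (Hf (clamp x) (clamp_I x) eps Heps) as [alp [Ha H]].
  exists alp; split; auto.
  intros y [_ Hy]. apply H. split. apply clamp_I.
  simpl in *; unfold R_dist in *. eapply Rle_lt_trans. apply clamp_lip. exact Hy.
Qed.

Lemma rel_to_abs f x l : -1 < x < 1 ->
  limit1_in (fun y => (f y - f x) / (y - x)) (fun y => in_I y /\ y <> x) l x ->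
  derivable_pt_lim f x l.
Proof.
  intros Hx H eps Heps.
  destruct (H eps Heps) as [alp [Ha Hal]].
  assert (Hd : 0 < Rmin alp (Rmin (1 - x) (x + 1))).
  { unfold Rmin; repeat destruct Rle_dec; lra. }
  exists (mkposreal _ Hd). intros h Hh0 Hh. simpl in Hh.
  assert (Hm1 : Rmin alp (Rmin (1 - x) (x + 1)) <= alp) by apply Rmin_l.
  assert (Hm2 : Rmin alp (Rmin (1 - x) (x + 1)) <= Rmin (1 - x) (x + 1)) by apply Rmin_r.
  assert (Hm3 : Rmin (1 - x) (x + 1) <= 1 - x) by apply Rmin_l.
  assert (Hm4 : Rmin (1 - x) (x + 1) <= x + 1) by apply Rmin_r.
  specialize (Hal (x + h)). simpl in Hal; unfold R_dist in Hal.
  replace (x + h - x) with h in Hal by ring.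
  apply Hal. split. split. unfold in_I. split_Rabs; lra. lra.
  lra.
Qed.

Lemma abs_to_rel f x l : derivable_pt_lim f x l ->
  limit1_in (fun y => (f y - f x) / (y - x)) (fun y => in_I y /\ y <> x) l x.
Proof.
  intros H eps Heps.
  destruct (H eps Heps) as [del Hd].
  exists del; split. apply cond_pos.
  intros y [[_ Hy] Hyd]. simpl in *; unfold R_dist in *.
  specialize (Hd (y - x)). replace (x + (y - x)) with y in Hd by ring.
  apply Hd. lra. exact Hyd.
Qed.

Lemma limit1_in_ext f g D l x : (forall y, D y -> f y = g y) ->
  limit1_in f D l x -> limit1_in g D l x.
Proof.
  intros He H eps Heps. destruct (H eps Heps) as [alp [Ha Hal]].
  exists alp; split; auto. intros y [Dy Hy]. rewrite <- He by auto. apply Hal; auto.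
Qed.

Lemma rel_minus f g f' g' x :
  limit1_in (fun y => (f y - f x) / (y - x)) (fun y => in_I y /\ y <> x) f' x ->
  limit1_in (fun y => (g y - g x) / (y - x)) (fun y => in_I y /\ y <> x) g' x ->
  limit1_in (fun y => ((f y - g y) - (f x - g x)) / (y - x)) (fun y => in_I y /\ y <> x) (f' - g') x.
Proof.
  intros H1 H2. eapply limit1_in_ext. 2: apply limit_minus; [exact H1 | exact H2].
  intros y [_ Hy]. field. lra.
Qed.

Lemma rel_cont f l x : in_I x ->
  limit1_in (fun y => (f y - f x) / (y - x)) (fun y => in_I y /\ y <> x) l x ->
  limit1_in f in_I (f x) x.
Proof.
  intros Hx H eps Heps.
  destruct (H 1 Rlt_0_1) as [alp [Ha Hal]].
  assert (Hl : 0 < 1 + Rabs l) by (pose proof (Rabs_pos l); lra).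
  assert (Hd : 0 < Rmin alp (eps / (1 + Rabs l))).
  { apply Rmin_pos; auto. apply Rdiv_lt_0_compat; auto. }
  exists (Rmin alp (eps / (1 + Rabs l))); split; auto.
  intros y [Iy Hy]. simpl in *; unfold R_dist in *.
  destruct (Req_dec y x) as [->|Hne]. rewrite Rminus_diag, Rabs_R0; lra.
  assert (Hm1 : Rmin alp (eps / (1 + Rabs l)) <= alp) by apply Rmin_l.
  assert (Hm2 : Rmin alp (eps / (1 + Rabs l)) <= eps / (1 + Rabs l)) by apply Rmin_r.
  specialize (Hal y (conj (conj Iy Hne) (Rlt_le_trans _ _ _ Hy Hm1))).
  set (q := (f y - f x) / (y - x)) in *.
  assert (Hq : f y - f x = q * (y - x)) by (unfold q; field; lra).
  rewrite Hq, Rabs_mult.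
  assert (Hqa : Rabs q < 1 + Rabs l).
  { replace q with ((q - l) + l) by ring. eapply Rle_lt_trans. apply Rabs_triang. lra. }
  assert (Hyx : Rabs (y - x) < eps / (1 + Rabs l)) by lra.
  apply Rle_lt_trans with ((1 + Rabs l) * Rabs (y - x)).
  apply Rmult_le_compat_r. apply Rabs_pos. lra.
  apply Rmult_lt_compat_l with (r := 1 + Rabs l) in Hyx; auto.
  replace ((1 + Rabs l) * (eps / (1 + Rabs l))) with eps in Hyx by (field; lra). exact Hyx.
Qed.

Lemma locally_interior (P : R -> Prop) y : -1 < y < 1 ->
  (forall t, -1 < t < 1 -> P t) -> locally y P.
Proof.
  intros Hy HP.
  assert (Hd : 0 < Rmin (1 - y) (y + 1)) by (apply Rmin_pos; lra).
  exists (mkposreal _ Hd). intros t Ht. apply HP.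
  unfold ball in Ht; simpl in Ht; unfold AbsRing_ball, abs, minus, plus, opp in Ht; simpl in Ht.
  assert (Hm3 : Rmin (1 - y) (y + 1) <= 1 - y) by apply Rmin_l.
  assert (Hm4 : Rmin (1 - y) (y + 1) <= y + 1) by apply Rmin_r.
  split_Rabs; lra.
Qed.

Lemma mvt0 h : (forall y, -1 < y < 1 -> is_derive h y 0) ->
  (forall y, in_I y -> continuity_pt h y) -> forall x, in_I x -> h x = h (-1).
Proof.
  intros Hd Hc x Hx. destruct (Req_dec x (-1)) as [->|Hne]; auto.
  destruct (MVT_gen h (-1) x (fun _ => 0)) as [c [_ Hc']].
  - intros y Hy. apply Hd. unfold Rmin, Rmax, in_I in *; destruct Rle_dec; lra.
  - intros y Hy. apply Hc. unfold Rmin, Rmax, in_I in *; destruct Rle_dec; lra.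
  - lra.
Qed.

Definition rd (f : R -> R) (l x : R) :=
  limit1_in (fun y => (f y - f x) / (y - x)) (fun y => in_I y /\ y <> x) l x.

Lemma rel_const H : (forall x, in_I x -> rd H 0 x) -> forall x, in_I x -> H x = H (-1).
Proof.
  intros Hd x Hx.
  assert (Hc : cont_on_I H) by (intros y Hy; eapply rel_cont; eauto; apply Hd; auto).
  pose (K := fun y => H (clamp y)).
  assert (E : forall y, in_I y -> K y = H y) by (intros; unfold K; rewrite clamp_id; auto).
  rewrite <- (E x Hx), <- (E (-1)) by (unfold in_I; lra).
  apply mvt0; auto.
  - intros y Hy. apply is_derive_ext_loc with H.
    apply locally_interior; auto. intros t Ht; rewrite E; auto. unfold in_I; lra.
    apply is_derive_Reals. apply rel_to_abs; auto. apply Hd. unfold in_I; lra.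
  - intros y _. apply (clamp_cont H Hc).
Qed.

Lemma ex_RInt_cont (f : R -> R) a b : (forall x, continuous f x) -> ex_RInt f a b.
Proof. intros H; apply (ex_RInt_continuous (V := R_CompleteNormedModule)); intros; apply H. Qed.

Lemma deriv_prim (f : R -> R) c x : (forall y, continuous f y) ->
  is_derive (fun y => c + RInt f (-1) y) x (f x).
Proof.
  intros Hf.
  assert (H : is_derive (fun y => RInt f (-1) y) x (f x)).
  { apply is_derive_RInt with (a := -1). apply filter_forall. intros b.
    apply RInt_correct. apply ex_RInt_cont; auto. apply Hf. }
  apply is_derive_Reals in H. apply is_derive_Reals.
  replace (f x) with (0 + f x) by ring. apply derivable_pt_lim_plus; auto.
  apply derivable_pt_lim_const.
Qed.

Fixpoint ext (N : nat) (d : nat -> R -> R) (i : nat) : R -> R :=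
  match i with
  | O => fun x => d N (clamp x)
  | S i' => fun x => d (N - S i')%nat (-1) + RInt (ext N d i') (-1) x
  end.

Lemma ext_good N d : cont_on_I (d N) -> forall i,
  (forall x, continuous (ext N d i) x) /\ (forall x, is_derive (ext N d (S i)) x (ext N d i x)).
Proof.
  intros Hc i. induction i as [|i [IHc IHd]].
  - assert (C : forall x, continuous (ext N d 0) x).
    { intros x. apply continuity_pt_filterlim. apply (clamp_cont (d N) Hc). }
    split; auto. intros x. apply deriv_prim; auto.
  - assert (C : forall x, continuous (ext N d (S i)) x).
    { intros x. apply (ex_derive_continuous (K := R_AbsRing) (V := R_NormedModule)). eexists; apply IHd. }
    split; auto. intros x. apply deriv_prim; auto.
Qed.

Definition E N d (j : nat) := ext N d (N - j).

Definition Good (N : nat) (e : nat -> R -> R) :=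
  (forall j, (j < N)%nat -> forall x, is_derive (e j) x (e (S j) x)) /\
  (forall j, (j <= N)%nat -> forall x, continuous (e j) x).

Lemma E_good N d : cont_on_I (d N) -> Good N (E N d).
Proof.
  intros Hc. split.
  - intros j Hj x. unfold E. replace (N - j)%nat with (S (N - S j)) by lia.
    apply (ext_good N d Hc).
  - intros j Hj x. unfold E. apply (ext_good N d Hc).
Qed.

Lemma E_agree N d : Cm_derivs N d -> forall j, (j <= N)%nat -> forall x, in_I x -> E N d j x = d j x.
Proof.
  intros [Hd Hc].
  assert (K : forall i, (i <= N)%nat -> forall x, in_I x -> ext N d i x = d (N - i)%nat x).
  { induction i as [|i IH]; intros Hi x Hx.
    - simpl. rewrite clamp_id by auto. f_equal. lia.
    - set (j := (N - S i)%nat).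
      assert (Hj : (N - i)%nat = S j) by (unfold j; lia).
      pose (H := fun y => d j y - ext N d (S i) y).
      assert (HH : forall y, in_I y -> H y = H (-1)).
      { apply rel_const. intros y Hy. unfold rd, H.
        replace 0 with (d (S j) y - ext N d i y).
        apply rel_minus. apply Hd. unfold j; lia. auto.
        apply abs_to_rel. apply is_derive_Reals. apply (ext_good N d Hc).
        rewrite IH by (auto; lia). rewrite Hj. ring. }
      specialize (HH x Hx). unfold H in HH. simpl ext in HH at 2.
      rewrite RInt_point in HH. unfold zero in HH; simpl in HH. fold j in HH.
      change (ext N d (S i) x) with (d j (-1) + RInt (ext N d i) (-1) x). lra. }
  intros j Hj x Hx. unfold E. rewrite K by (auto; lia). replace (N - (N - j))%nat with j by lia; reflexivity.
Qed.

Opaque RInt.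
Definition Int (f : R -> R) : R := RInt f (-1) 1.

Lemma good_weak N M e : Good N e -> (M <= N)%nat -> Good M e.
Proof. intros [H1 H2] HM; split; intros; [apply H1 | apply H2]; lia. Qed.

Lemma cm (f g : R -> R) (x : R) : continuous f x -> continuous g x -> continuous (fun y => f y * g y) x.
Proof. intros; apply (continuous_mult f g x); auto. Qed.

Lemma cl (f g : R -> R) (c1 c2 x : R) : continuous f x -> continuous g x ->
  continuous (fun y => c1 * f y - c2 * g y) x.
Proof.
  intros Hf Hg. apply continuity_pt_filterlim in Hf. apply continuity_pt_filterlim in Hg.
  apply (continuity_pt_filterlim (fun y => c1 * f y - c2 * g y)).
  apply continuity_pt_minus; apply continuity_pt_scal; auto.
Qed.

Lemma ccst (c x : R) : continuous (fun _ : R => c) x.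
Proof. apply continuous_const. Qed.
Lemma cid (x : R) : continuous (fun y : R => y) x.
Proof. apply continuous_id. Qed.

Lemma dmult (f g : R -> R) a b x : is_derive f x a -> is_derive g x b ->
  is_derive (fun y => f y * g y) x (a * g x + f x * b).
Proof.
  intros Hf Hg. apply is_derive_Reals in Hf, Hg. apply is_derive_Reals.
  apply (derivable_pt_lim_mult f g x a b); auto.
Qed.

Lemma dlin (f g : R -> R) c1 c2 a b x : is_derive f x a -> is_derive g x b ->
  is_derive (fun y => c1 * f y - c2 * g y) x (c1 * a - c2 * b).
Proof.
  intros Hf Hg. apply is_derive_Reals in Hf, Hg. apply is_derive_Reals.
  apply derivable_pt_lim_minus; apply derivable_pt_lim_scal; auto.
Qed.

Lemma did x : is_derive (fun y : R => y) x 1.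
Proof. apply is_derive_Reals, derivable_pt_lim_id. Qed.

Lemma dcst c x : is_derive (fun _ : R => c) x 0.
Proof. apply is_derive_Reals, derivable_pt_lim_const. Qed.

Lemma lin2 (u v : R -> R) c1 c2 : (forall x, continuous u x) -> (forall x, continuous v x) ->
  Int (fun x => c1 * u x - c2 * v x) = c1 * Int u - c2 * Int v.
Proof.
  intros Hu Hv. unfold Int.
  assert (Eu := ex_RInt_cont u (-1) 1 Hu). assert (Ev := ex_RInt_cont v (-1) 1 Hv).
  assert (Eu' : ex_RInt (fun x => scal c1 (u x)) (-1) 1) by (apply (ex_RInt_scal (V := R_CompleteNormedModule)); auto).
  assert (Ev' : ex_RInt (fun x => scal c2 (v x)) (-1) 1) by (apply (ex_RInt_scal (V := R_CompleteNormedModule)); auto).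
  pose proof (RInt_minus (V := R_CompleteNormedModule) (fun x => scal c1 (u x)) (fun x => scal c2 (v x)) (-1) 1 Eu' Ev') as H.
  rewrite (RInt_scal (V := R_CompleteNormedModule) u) in H by auto.
  rewrite (RInt_scal (V := R_CompleteNormedModule) v) in H by auto.
  exact H.
Qed.

Lemma ftc (F f : R -> R) : (forall x, is_derive F x (f x)) -> (forall x, continuous f x) ->
  Int f = F 1 - F (-1).
Proof.
  intros Hd Hc. unfold Int. apply is_RInt_unique.
  apply (is_RInt_derive (V := R_CompleteNormedModule)); intros; auto.
Qed.

Lemma int_ext (f g : R -> R) : (forall x, -1 < x < 1 -> f x = g x) -> Int f = Int g.
Proof.
  intros H. unfold Int. apply RInt_ext. intros x Hx. apply H.
  rewrite Rmin_left, Rmax_right in Hx by lra. auto.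
Qed.

Lemma int_zero : Int (fun _ => 0) = 0.
Proof. unfold Int. rewrite RInt_const. unfold scal; simpl. unfold mult; simpl. ring. Qed.

Lemma lin_plus (u v : R -> R) : (forall x, continuous u x) -> (forall x, continuous v x) ->
  Int (fun x => u x + v x) = Int u + Int v.
Proof.
  intros Hu Hv. rewrite (int_ext _ (fun x => 1 * u x - (-1) * v x)).
  rewrite (lin2 u v 1 (-1)) by auto. ring.
  intros x _. ring.
Qed.

Lemma good_c N e j x : Good N e -> (j <= N)%nat -> continuous (e j) x.
Proof. intros [_ H] Hj; apply H; auto. Qed.

Lemma ibp1 N1 N2 f h i j : Good N1 f -> Good N2 h -> (i < N1)%nat -> (j < N2)%nat ->
  Int (fun x => f (S i) x * h j x) =
  f i 1 * h j 1 - f i (-1) * h j (-1) - Int (fun x => f i x * h (S j) x).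
Proof.
  intros Gf Gh Hi Hj.
  assert (Ca : forall x, continuous (fun x => f (S i) x * h j x) x)
    by (intros; apply cm; eapply good_c; eauto; lia).
  assert (Cb : forall x, continuous (fun x => f i x * h (S j) x) x)
    by (intros; apply cm; eapply good_c; eauto; lia).
  assert (K : Int (fun x => f (S i) x * h j x + f i x * h (S j) x) = f i 1 * h j 1 - f i (-1) * h j (-1)).
  { apply (ftc (fun x => f i x * h j x)).
    - intros x. apply dmult; [apply Gf | apply Gh]; auto.
    - intros x. apply (continuous_plus (fun x => f (S i) x * h j x) (fun x => f i x * h (S j) x)); auto. }
  rewrite lin_plus in K by auto. lra.
Qed.

Lemma ibp_iter N1 N2 f h : Good N1 f -> Good N2 h -> forall r, (r <= N1)%nat ->
  (forall i, (i < r)%nat -> f i 1 = 0 /\ f i (-1) = 0) ->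
  forall j, (j + r <= N2)%nat ->
  Int (fun x => f r x * h j x) = (-1) ^ r * Int (fun x => f 0%nat x * h (j + r)%nat x).
Proof.
  intros Gf Gh r. induction r as [|r IH]; intros Hr Hb j Hj.
  - rewrite Nat.add_0_r, pow_O, Rmult_1_l. reflexivity.
  - rewrite ibp1 with (N1 := N1) (N2 := N2) by (auto; lia).
    destruct (Hb r) as [B1 B2]; [lia|]. rewrite B1, B2.
    rewrite IH by (auto; lia). replace (S j + r)%nat with (j + S r)%nat by lia.
    simpl. ring.
Qed.

Lemma pos0 (g : R -> R) : (forall x, continuous g x) -> Int (fun x => g x * g x) = 0 ->
  forall x, in_I x -> g x = 0.
Proof.
  intros Hc H0 x0 Hx0. destruct (Req_dec (g x0) 0) as [|Hne]; auto. exfalso.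
  set (h := fun x => g x * g x).
  assert (Hh : 0 < h x0) by (unfold h; nra).
  assert (Ch : forall x, continuous h x) by (intros; apply cm; auto).
  assert (Cp := proj2 (continuity_pt_filterlim h x0) (Ch x0)).
  destruct (Cp (h x0 / 2)) as [alp [Ha Hal]]. lra.
  assert (Pos : forall y, Rabs (y - x0) < alp -> 0 < h y).
  { intros y Hy. destruct (Req_dec y x0) as [->|Hn]; auto.
    assert (Q := Hal y). simpl in Q; unfold R_dist, D_x, no_cond in Q.
    assert (Q' : Rabs (h y - h x0) < h x0 / 2) by (apply Q; split; auto).
    split_Rabs; lra. }
  set (a := Rmax (-1) (x0 - alp / 2)). set (b := Rmin 1 (x0 + alp / 2)).
  unfold in_I in Hx0.
  assert (Hab : -1 <= a /\ a < b /\ b <= 1 /\ x0 - alp/2 <= a /\ b <= x0 + alp/2).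
  { unfold a, b, Rmax, Rmin. repeat destruct Rle_dec; lra. }
  assert (E : forall a b, ex_RInt h a b) by (intros; apply ex_RInt_cont; auto).
  assert (I1 : 0 <= RInt h (-1) a) by (apply RInt_ge_0; [lra|auto|intros; unfold h; nra]).
  assert (I3 : 0 <= RInt h b 1) by (apply RInt_ge_0; [lra|auto|intros; unfold h; nra]).
  assert (I2 : 0 < RInt h a b).
  { apply RInt_gt_0. lra. intros y Hy. apply Pos. split_Rabs; lra. intros; auto. }
  assert (C1 := RInt_Chasles h (-1) a b (E _ _) (E _ _)).
  assert (C2 := RInt_Chasles h (-1) b 1 (E _ _) (E _ _)).
  unfold Int in H0. fold h in H0.
  change (RInt h (-1) a + RInt h a b = RInt h (-1) b) in C1.
  change (RInt h (-1) b + RInt h b 1 = RInt h (-1) 1) in C2.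
  lra.
Qed.

Lemma mvt0g (h : R -> R) : (forall y, -1 < y < 1 -> is_derive h y 0) ->
  (forall y, continuous h y) -> forall x, in_I x -> h x = h (-1).
Proof.
  intros Hd Hc. apply mvt0; auto. intros y _. apply continuity_pt_filterlim. apply Hc.
Qed.

Lemma even_int (z : R -> R) : (forall x, in_I x -> z (- x) = z x) -> (forall x, continuous z x) ->
  Int (fun x => x * z x) = 0.
Proof.
  intros He Hc.
  set (f := fun x => x * z x).
  assert (Cf : forall x, continuous f x) by (intros; apply cm; [apply cid | auto]).
  assert (K := RInt_comp_lin (V := R_CompleteNormedModule) f (-1) 0 (-1) 1 (ex_RInt_cont _ _ _ Cf)).
  replace (-1 * -1 + 0) with 1 in K by ring. replace (-1 * 1 + 0) with (-1) in K by ring.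
  assert (K2 : RInt f 1 (-1) = Int f).
  { rewrite <- K. unfold Int. apply RInt_ext. intros x Hx. rewrite Rmin_left, Rmax_right in Hx by lra.
    unfold f. replace (-1 * x + 0) with (- x) by ring. rewrite He by (unfold in_I; lra).
    unfold scal; simpl; unfold mult; simpl. ring. }
  assert (K3 := opp_RInt_swap (V := R_CompleteNormedModule) f (-1) 1 (ex_RInt_cont _ _ _ Cf)).
  rewrite <- K3 in K2. unfold Int in K2. change (- RInt f (-1) 1 = RInt f (-1) 1) in K2.
  unfold Int. fold f. lra.
Qed.

Lemma dval (f : R -> R) (x a b : R) : is_derive f x a -> a = b -> is_derive f x b.
Proof. intros H ->; exact H. Qed.

Lemma rellich m e r : Good (2 * m) e -> (r < 2 * m)%nat -> e r 1 = 0 -> e r (-1) = 0 ->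
  Int (fun x => (x * e (S r) x + INR r * e r x) * e r x) = (INR r - 1/2) * Int (fun x => e r x * e r x).
Proof.
  intros G Hr B1 B2.
  assert (C : forall j x, (j <= 2 * m)%nat -> continuous (e j) x) by (intros; eapply good_c; eauto).
  assert (Gd : forall x, is_derive (e r) x (e (S r) x)) by (intros; apply G; lia).
  assert (Cu : forall x, continuous (fun x => e r x * e r x) x) by (intros; apply cm; apply C; lia).
  assert (Cv : forall x, continuous (fun x => x * e (S r) x * e r x) x)
    by (intros; apply cm; [apply cm; [apply cid | apply C; lia] | apply C; lia]).
  assert (K : Int (fun x => 1 * (e r x * e r x) - (-2) * (x * e (S r) x * e r x)) = 0).
  { rewrite (ftc (fun x => x * e r x * e r x)).
    - rewrite B1, B2. ring.
    - intros x. eapply dval; [apply dmult; [apply dmult; [apply did | apply Gd] | apply Gd] | simpl; ring].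
    - intros x. apply cl; auto. }
  rewrite lin2 in K by auto.
  rewrite (int_ext _ (fun x => 1 * (x * e (S r) x * e r x) - (- INR r) * (e r x * e r x))).
  rewrite lin2 by auto. lra.
  intros; ring.
Qed.

Definition Lop (m p : nat) (Lam : R) (e : nat -> R -> R) (x : R) : R :=
  (-1) ^ m * e (2 * m)%nat x - Lam * (-1) ^ (m - p) * e (2 * m - 2 * p)%nat x.

Lemma lemX (m p : nat) (Lam : R) (e : nat -> R -> R) :
  (1 <= p)%nat -> (p <= m)%nat -> Good (2 * m) e ->
  (forall j, (j <= m)%nat -> e j 1 = 0 /\ e j (-1) = 0) ->
  Int (fun x => e 0%nat x * Lop m p Lam e x) = 0 ->
  Int (fun x => (x * e 1%nat x) * Lop m p Lam e x) = 0 ->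
  forall j, (j <= m)%nat -> forall x, in_I x -> e j x = 0.
Proof.
  intros Hp Hpm G Hb H1 H2.
  unfold Lop in H1, H2.
  set (s1 := (-1) ^ m) in *. set (s2 := (-1) ^ (m - p)) in *.
  assert (C : forall j x, (j <= 2 * m)%nat -> continuous (e j) x) by (intros; eapply good_c; eauto).
  assert (Hb' : forall i, (i < m)%nat -> e i 1 = 0 /\ e i (-1) = 0) by (intros; apply Hb; lia).
  set (A := Int (fun x => e m x * e m x)). set (B := Int (fun x => e (m - p)%nat x * e (m - p)%nat x)).
  assert (IA : A = s1 * Int (fun x => e 0%nat x * e (2 * m)%nat x)).
  { unfold A, s1. rewrite (ibp_iter (2 * m) (2 * m) e e G G m) by (auto; lia).
    replace (m + m)%nat with (2 * m)%nat by lia. reflexivity. }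
  assert (IB : B = s2 * Int (fun x => e 0%nat x * e (2 * m - 2 * p)%nat x)).
  { unfold B, s2. rewrite (ibp_iter (2 * m) (2 * m) e e G G (m - p)) by (first [lia | intros; apply Hb; lia]).
    replace (m - p + (m - p))%nat with (2 * m - 2 * p)%nat by lia. reflexivity. }
  rewrite (int_ext _ (fun x => s1 * (e 0%nat x * e (2 * m)%nat x) - (Lam * s2) * (e 0%nat x * e (2 * m - 2 * p)%nat x))) in H1
    by (intros; ring).
  rewrite lin2 in H1 by (intros; apply cm; apply C; lia).
  assert (AB : A = Lam * B) by (rewrite IA, IB; lra).
  set (phi := fun j x => x * e (S j) x + INR j * e j x).
  assert (Gphi : Good (2 * m - 1) phi).
  { split.
    - intros j Hj x. unfold phi. eapply dval.
      + apply (is_derive_plus (fun x => x * e (S j) x) (fun x => INR j * e j x)).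
        apply dmult; [apply did | apply G; lia].
        apply (is_derive_scal (fun x => e j x)). apply G; lia.
      + cbv beta. rewrite S_INR. unfold plus, scal. simpl. unfold mult; simpl. ring.
    - intros j Hj x. unfold phi.
      apply (continuous_plus (fun x => x * e (S j) x) (fun x => INR j * e j x)).
      apply cm; [apply cid | apply C; lia].
      apply (cm (fun _ => INR j)); [apply ccst | apply C; lia]. }
  assert (Hbp : forall i, (i < m)%nat -> phi i 1 = 0 /\ phi i (-1) = 0).
  { intros i Hi. unfold phi. destruct (Hb (S i)) as [b1 b2]; [lia|]. destruct (Hb i) as [b3 b4]; [lia|].
    rewrite b1, b2, b3, b4. split; ring. }
  assert (IPA : Int (fun x => phi m x * e m x) = s1 * Int (fun x => phi 0%nat x * e (2 * m)%nat x)).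
  { unfold s1. rewrite (ibp_iter (2 * m - 1) (2 * m) phi e Gphi G m) by (auto; lia).
    replace (m + m)%nat with (2 * m)%nat by lia. reflexivity. }
  assert (IPB : Int (fun x => phi (m - p)%nat x * e (m - p)%nat x) = s2 * Int (fun x => phi 0%nat x * e (2 * m - 2 * p)%nat x)).
  { unfold s2. rewrite (ibp_iter (2 * m - 1) (2 * m) phi e Gphi G (m - p)) by (first [lia | intros; apply Hbp; lia]).
    replace (m - p + (m - p))%nat with (2 * m - 2 * p)%nat by lia. reflexivity. }
  assert (Cphi0 : forall x, continuous (phi 0%nat) x) by (intros; apply Gphi; lia).
  rewrite (int_ext _ (fun x => s1 * (phi 0%nat x * e (2 * m)%nat x) - (Lam * s2) * (phi 0%nat x * e (2 * m - 2 * p)%nat x))) in H2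
    by (intros; unfold phi; rewrite INR_0; ring).
  rewrite lin2 in H2 by (intros; apply cm; [apply Cphi0 | apply C; lia]).
  assert (R1 := rellich m e m G ltac:(lia) (proj1 (Hb m (le_n m))) (proj2 (Hb m (le_n m)))).
  assert (R2 := rellich m e (m - p) G ltac:(lia) (proj1 (Hb (m - p)%nat ltac:(lia))) (proj2 (Hb (m - p)%nat ltac:(lia)))).
  fold A in R1. fold B in R2. unfold phi in IPA, IPB, H2.
  rewrite R1 in IPA. rewrite R2 in IPB.
  rewrite minus_INR in IPB by lia.
  assert (Q : INR p * (Lam * B) = 0).
  { assert (Q1 : INR p * (Lam * B) = (INR m - 1/2) * A - Lam * ((INR m - INR p) - 1/2) * B) by (rewrite AB; ring).
    rewrite Q1. replace (Lam * (INR m - INR p - 1 / 2) * B) with (Lam * ((INR m - INR p - 1 / 2) * B)) by ring. rewrite IPA, IPB. lra. }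
  assert (Hp' : 0 < INR p) by (apply lt_0_INR; lia).
  assert (LB : Lam * B = 0).
  { destruct (Rmult_integral _ _ Q) as [Q'|Q']; auto. lra. }
  assert (A0 : A = 0) by lra.
  assert (Em : forall x, in_I x -> e m x = 0) by (apply pos0; [intros; apply C; lia | exact A0]).
  assert (Down : forall i, (i <= m)%nat -> forall x, in_I x -> e (m - i)%nat x = 0).
  { induction i as [|i IH]; intros Hi x Hx.
    - rewrite Nat.sub_0_r. auto.
    - set (j := (m - S i)%nat).
      assert (Hj : (m - i)%nat = S j) by (unfold j; lia).
      rewrite (mvt0g (e j)); auto.
      + apply Hb. unfold j; lia.
      + intros y Hy. eapply dval. apply G. unfold j; lia.
        rewrite <- Hj. apply IH. lia. unfold in_I; lra.
      + intros; apply C; unfold j; lia. }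
  intros j Hj x Hx. replace j with (m - (m - j))%nat by lia. apply Down; auto; lia.
Qed.

Lemma deriv_prim0 (f : R -> R) x : (forall y, continuous f y) ->
  is_derive (fun y => RInt f (-1) y : R) x (f x).
Proof.
  intros Hf. apply (is_derive_RInt (V := R_CompleteNormedModule)) with (a := -1). apply filter_forall. intros b.
  apply (RInt_correct (V := R_CompleteNormedModule)). apply ex_RInt_cont; auto. apply Hf.
Qed.

Lemma cont_of_der (f : R -> R) (g : R -> R) : (forall x, is_derive f x (g x)) -> forall x, continuous f x.
Proof.
  intros H x. apply (ex_derive_continuous (K := R_AbsRing) (V := R_NormedModule)). eexists; apply H.
Qed.

Lemma neg_pow (k p : nat) : (p <= k)%nat -> (-1) ^ (S k - p) = - ((-1) ^ (k - p)).
Proof. intros H. replace (S k - p)%nat with (S (k - p)) by lia. simpl. ring. Qed.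

Theorem mainTheorem5 (p n : nat) :
  (1 <= p)%nat -> (p + 1 <= n)%nat ->
  forall Lam : R, ~ (S_s p (n - 1) Lam /\ S_s p n Lam).
Proof.
  intros Hp Hn Lam [HS1 HS2].
  destruct n as [|k]; [lia|]. replace (S k - 1)%nat with k in HS1 by lia.
  assert (Hpk : (p <= k)%nat) by lia.
  destruct HS1 as [_ [z1 [[d1 [D10 [Cm1 [O1 [B1 NZ1]]]]] Ev1]]].
  destruct HS2 as [_ [z2 [[d2 [D20 [Cm2 [O2 [B2 NZ2]]]]] Ev2]]].
  set (e1 := E (2 * k) d1). set (e2 := E (2 * S k) d2).
  assert (G1 : Good (2 * k) e1) by (apply E_good; apply Cm1).
  assert (G2 : Good (2 * S k) e2) by (apply E_good; apply Cm2).
  assert (A1 : forall j, (j <= 2 * k)%nat -> forall x, in_I x -> e1 j x = d1 j x) by (apply E_agree; auto).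
  assert (A2 : forall j, (j <= 2 * S k)%nat -> forall x, in_I x -> e2 j x = d2 j x) by (apply E_agree; auto).
  assert (Ip : in_I 1) by (unfold in_I; lra). assert (Im : in_I (-1)) by (unfold in_I; lra).
  assert (C1 : forall j x, (j <= 2 * k)%nat -> continuous (e1 j) x) by (intros; eapply good_c; eauto).
  assert (C2 : forall j x, (j <= 2 * S k)%nat -> continuous (e2 j) x) by (intros; eapply good_c; eauto).
  assert (BC1 : forall j, (j < k)%nat -> e1 j 1 = 0 /\ e1 j (-1) = 0).
  { intros j Hj. rewrite !A1 by (auto; lia). apply B1; auto. }
  assert (BC2 : forall j, (j < S k)%nat -> e2 j 1 = 0 /\ e2 j (-1) = 0).
  { intros j Hj. rewrite !A2 by (auto; lia). apply B2; auto. }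
  assert (Z1e : forall x, in_I x -> e1 0%nat x = z1 x) by (intros; rewrite A1 by (auto; lia); rewrite D10; auto).
  assert (Z2e : forall x, in_I x -> e2 0%nat x = z2 x) by (intros; rewrite A2 by (auto; lia); rewrite D20; auto).
  assert (X1 : Int (fun x => x * e1 0%nat x) = 0).
  { apply even_int. intros x Hx. assert (Hx' : in_I (-x)) by (unfold in_I in *; lra).
    rewrite !Z1e by auto. apply Ev1; auto. intros; apply C1; lia. }
  assert (X2 : Int (fun x => x * e2 0%nat x) = 0).
  { apply even_int. intros x Hx. assert (Hx' : in_I (-x)) by (unfold in_I in *; lra).
    rewrite !Z2e by auto. apply Ev2; auto. intros; apply C2; lia. }
  assert (L1 : forall x, in_I x -> Lop k p Lam e1 x = 0).
  { intros x Hx. unfold Lop. rewrite !A1 by (auto; lia). apply O1; auto. }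
  set (s1 := (-1) ^ k). set (s2 := (-1) ^ (k - p)).
  set (g := Lop k p Lam e2).
  set (gp := fun x => s1 * e2 (S (2 * k)) x - Lam * s2 * e2 (S (2 * k - 2 * p)) x).
  set (gpp := fun x => s1 * e2 (S (S (2 * k))) x - Lam * s2 * e2 (S (S (2 * k - 2 * p))) x).
  assert (Dg : forall x, is_derive g x (gp x)).
  { intros x. unfold g, gp, Lop. fold s1 s2.
    rewrite (Rmult_assoc Lam s2). eapply dval. apply dlin; apply G2; lia. unfold gp; ring. }
  assert (Dgp : forall x, is_derive gp x (gpp x)).
  { intros x. unfold gp, gpp. eapply dval. apply dlin; apply G2; lia. simpl; ring. }
  assert (Gpp0 : forall x, in_I x -> gpp x = 0).
  { intros x Hx. assert (O := O2 x Hx). rewrite <- !A2 in O by (auto; lia).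
    replace (2 * S k)%nat with (S (S (2 * k))) in O by lia.
    replace (S (S (2 * k)) - 2 * p)%nat with (S (S (2 * k - 2 * p))) in O by lia.
    rewrite neg_pow in O by auto. change ((-1) ^ S k) with (-1 * (-1) ^ k) in O.
    unfold gpp. fold s1 s2 in O. lra. }
  set (beta := gp (-1)).
  assert (Gpc : forall x, in_I x -> gp x = beta).
  { apply mvt0g. intros y Hy. eapply dval. apply Dgp. apply Gpp0. unfold in_I; lra.
    apply (cont_of_der _ _ Dgp). }
  set (hh := fun x => g x - beta * x).
  set (alpha := hh (-1)).
  assert (Gaff : forall x, in_I x -> g x = alpha + beta * x).
  { intros x Hx. assert (K : hh x = hh (-1)).
    { apply mvt0g; auto. intros y Hy. unfold hh. eapply dval.
      apply (is_derive_minus g (fun x => beta * x)). apply Dg.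
      apply (is_derive_scal (fun x => x)). apply did.
      rewrite Gpc by (unfold in_I; lra). unfold minus, plus, opp, scal; simpl; unfold mult; simpl. ring.
      apply (cont_of_der _ (fun x => gp x - beta * 1)). intros y. unfold hh.
      apply (is_derive_minus g (fun x => beta * x)). apply Dg.
      apply (is_derive_scal (fun x => x)). apply did. }
    unfold hh in K. unfold alpha, hh. lra. }
  (* Fredholm *)
  assert (Ce10 : forall x, continuous (e1 0%nat) x) by (intros; apply C1; lia).
  assert (Cxe10 : forall x, continuous (fun x => x * e1 0%nat x) x) by (intros; apply cm; [apply cid | auto]).
  assert (F1 : Int (fun x => e1 0%nat x * g x) = alpha * Int (e1 0%nat)).
  { rewrite (int_ext _ (fun x => alpha * e1 0%nat x - (- beta) * (x * e1 0%nat x))).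
    rewrite lin2 by auto. rewrite X1. ring.
    intros x Hx. rewrite Gaff by (unfold in_I; lra). ring. }
  assert (F2 : Int (fun x => e1 0%nat x * g x) =
     s1 * Int (fun x => e1 0%nat x * e2 (2 * k)%nat x) - (Lam * s2) * Int (fun x => e1 0%nat x * e2 (2 * k - 2 * p)%nat x)).
  { rewrite <- lin2 by (intros; apply cm; auto; apply C2; lia). apply int_ext. intros x _.
    unfold g, Lop. fold s1 s2. ring. }
  assert (I1 : Int (fun x => e1 k x * e2 k x) = s1 * Int (fun x => e1 0%nat x * e2 (2 * k)%nat x)).
  { unfold s1. rewrite (ibp_iter (2 * k) (2 * S k) e1 e2 G1 G2 k) by (first [lia | auto]).
    replace (k + k)%nat with (2 * k)%nat by lia. reflexivity. }
  assert (I2 : Int (fun x => e1 (k - p)%nat x * e2 (k - p)%nat x) = s2 * Int (fun x => e1 0%nat x * e2 (2 * k - 2 * p)%nat x)).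
  { unfold s2. rewrite (ibp_iter (2 * k) (2 * S k) e1 e2 G1 G2 (k - p)) by (first [lia | intros; apply BC1; lia]).
    replace (k - p + (k - p))%nat with (2 * k - 2 * p)%nat by lia. reflexivity. }
  assert (I3 : Int (fun x => e2 k x * e1 k x) = s1 * Int (fun x => e2 0%nat x * e1 (2 * k)%nat x)).
  { unfold s1. rewrite (ibp_iter (2 * S k) (2 * k) e2 e1 G2 G1 k) by (first [lia | intros; apply BC2; lia]).
    replace (k + k)%nat with (2 * k)%nat by lia. reflexivity. }
  assert (I4 : Int (fun x => e2 (k - p)%nat x * e1 (k - p)%nat x) = s2 * Int (fun x => e2 0%nat x * e1 (2 * k - 2 * p)%nat x)).
  { unfold s2. rewrite (ibp_iter (2 * S k) (2 * k) e2 e1 G2 G1 (k - p)) by (first [lia | intros; apply BC2; lia]).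
    replace (k - p + (k - p))%nat with (2 * k - 2 * p)%nat by lia. reflexivity. }
  assert (F3 : s1 * Int (fun x => e2 0%nat x * e1 (2 * k)%nat x) - (Lam * s2) * Int (fun x => e2 0%nat x * e1 (2 * k - 2 * p)%nat x) = 0).
  { rewrite <- lin2 by (intros; apply cm; [apply C2; lia | apply C1; lia]). rewrite <- int_zero. apply int_ext.
    intros x Hx. assert (Q := L1 x ltac:(unfold in_I; lra)). unfold Lop in Q. fold s1 s2 in Q.
    transitivity (e2 0%nat x * (s1 * e1 (2 * k)%nat x - Lam * s2 * e1 (2 * k - 2 * p)%nat x)). ring.
    rewrite Q. ring. }
  assert (Cm12 : forall a b, Int (fun x => e1 a x * e2 b x) = Int (fun x => e2 b x * e1 a x)).
  { intros a b. apply int_ext. intros; ring. }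
  assert (AF : alpha * Int (e1 0%nat) = 0).
  { rewrite <- F1, F2, (Rmult_assoc Lam s2), <- I1, <- I2, (Cm12 k k), (Cm12 (k - p)%nat (k - p)%nat), I3, I4.
    rewrite <- Rmult_assoc. exact F3. }
  destruct (Rmult_integral _ _ AF) as [Ha0 | Hi0].
  -
    assert (Ce20 : forall x, continuous (e2 0%nat) x) by (intros; apply C2; lia).
    assert (Cxe20 : forall x, continuous (fun x => x * e2 0%nat x) x) by (intros; apply cm; [apply cid | auto]).
    assert (Cxxe21 : forall x, continuous (fun x => x * x * e2 1%nat x) x)
      by (intros; apply cm; [apply cm; apply cid | apply C2; lia]).
    assert (W : Int (fun x => x * x * e2 1%nat x) = 0).
    { assert (K : Int (fun x => 1 * (x * x * e2 1%nat x) - (-2) * (x * e2 0%nat x)) = 0).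
      { rewrite (ftc (fun x => x * x * e2 0%nat x)).
        - destruct (BC2 0%nat) as [b1 b2]; [lia|]. rewrite b1, b2. ring.
        - intros x. eapply dval; [apply dmult; [apply dmult; apply did | apply G2; lia] | simpl; ring].
        - intros x. apply cl; auto. }
      rewrite lin2 in K by auto. rewrite X2 in K. lra. }
    assert (Z : forall j, (j <= k)%nat -> forall x, in_I x -> e2 j x = 0).
    { apply (lemX k p Lam e2); auto.
      - apply (good_weak _ _ _ G2); lia.
      - intros; apply BC2; lia.
      - change (Lop k p Lam e2) with g.
        rewrite (int_ext _ (fun x => beta * (x * e2 0%nat x) - 0 * (x * e2 0%nat x))).
        rewrite lin2 by auto. rewrite X2. ring.
        intros x Hx. rewrite (Gaff x) by (unfold in_I; lra). rewrite Ha0. ring.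
      - change (Lop k p Lam e2) with g.
        rewrite (int_ext _ (fun x => beta * (x * x * e2 1%nat x) - 0 * (x * x * e2 1%nat x))).
        rewrite lin2 by auto. rewrite W. ring.
        intros x Hx. rewrite (Gaff x) by (unfold in_I; lra). rewrite Ha0. ring. }
    destruct NZ2 as [x [Hx Hz]]. apply Hz. rewrite <- Z2e by auto. apply Z; auto; lia.
  -
    set (Z1 := fun x => (RInt (e1 0%nat) (-1) x : R)).
    set (Z0 := fun x => (RInt Z1 (-1) x : R)).
    pose (Zf := fun j : nat => match j with O => Z0 | S O => Z1 | S (S j') => e1 j' end).
    assert (DZ1 : forall x, is_derive Z1 x (e1 0%nat x)) by (intros; apply deriv_prim0; auto).
    assert (CZ1 := cont_of_der Z1 (e1 0%nat) DZ1).
    assert (DZ0 : forall x, is_derive Z0 x (Z1 x)) by (intros; apply deriv_prim0; auto).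
    assert (GZ : Good (2 * S k) Zf).
    { split.
      - intros j Hj x. destruct j as [|[|j]]; simpl. exact (DZ0 x). exact (DZ1 x). apply G1; lia.
      - intros j Hj x. destruct j as [|[|j]]; simpl. apply (cont_of_der _ _ DZ0). apply CZ1. apply C1; lia. }
    assert (Z1m : Z1 (-1) = 0) by (unfold Z1; rewrite RInt_point; reflexivity).
    assert (Z1p : Z1 1 = 0) by exact Hi0.
    assert (IZ1 : Int Z1 = 0).
    { assert (K : Int (fun x => 1 * Z1 x - (-1) * (x * e1 0%nat x)) = 0).
      { rewrite (ftc (fun x => x * Z1 x)).
        - rewrite Z1m, Z1p. ring.
        - intros x. eapply dval; [apply dmult; [apply did | apply DZ1] | simpl; ring].
        - intros x. apply cl; auto. }
      rewrite lin2 in K by auto. rewrite X1 in K. lra. }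
    assert (BCZ : forall j, (j <= S k)%nat -> Zf j 1 = 0 /\ Zf j (-1) = 0).
    { intros j Hj. destruct j as [|[|j]]; simpl.
      - split. exact IZ1. unfold Z0; rewrite RInt_point; reflexivity.
      - auto.
      - apply BC1; lia. }
    assert (LZ : forall x, in_I x -> Lop (S k) p Lam Zf x = 0).
    { intros x Hx. assert (Q := L1 x Hx). unfold Lop in *.
      replace (2 * S k)%nat with (S (S (2 * k))) by lia.
      replace (S (S (2 * k)) - 2 * p)%nat with (S (S (2 * k - 2 * p))) by lia.
      change (Zf (S (S (2 * k))) x) with (e1 (2 * k)%nat x).
      change (Zf (S (S (2 * k - 2 * p))) x) with (e1 (2 * k - 2 * p)%nat x).
      rewrite neg_pow by auto. change ((-1) ^ S k) with (-1 * (-1) ^ k).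
      lra. }
    assert (Z : forall j, (j <= S k)%nat -> forall x, in_I x -> Zf j x = 0).
    { apply (lemX (S k) p Lam Zf); auto; try lia.
      - rewrite <- int_zero. apply int_ext. intros x Hx. rewrite LZ by (unfold in_I; lra). ring.
      - rewrite <- int_zero. apply int_ext. intros x Hx. rewrite LZ by (unfold in_I; lra). ring. }
    destruct NZ1 as [x [Hx Hz]]. apply Hz. rewrite <- Z1e by auto.
    apply (Z 2%nat); auto; lia.
Qed.
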